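(* Let $N\ge 1$, let $\gamma_1,\dots,\gamma_N>0$, let $G$ be an $N\times N$ complex Hermitian matrix and $F$ an $N\times N$ complex symmetric matrix. Define $\Gamma=\mathrm{diag}(\gamma_1,\dots,\gamma_N,\gamma_1,\dots,\gamma_N)$, $$\mathcal{M}=\begin{pmatrix}\mathrm{Im}[G+F] & \mathrm{Re}[G-F]\\ -\mathrm{Re}[G+F] & -\mathrm{Im}[G+F]^{\mathrm T}\end{pmatrix},\qquad \mathbb{J}=\begin{pmatrix}0 & I\\ -I & 0\end{pmatrix},$$ with $I$ the $N\times N$ identity, and assume $\mathrm{i}\omega\mathbb{I}+\Gamma-\mathcal{M}$ is invertible for all $\omega\in\mathbb{R}$ ($\mathbb{I}$ the $2N\times2N$ identity). Let $S(\omega)=\sqrt{2\Gamma}\,(\mathrm{i}\omega\mathbb{I}+\Gamma-\mathcal{M})^{-1}\sqrt{2\Gamma}-\mathbb{I}$. Then $\mathcal{M}$ is a Hamiltonian matrix, i.e. $(\mathbb{J}\mathcal{M})^{\mathrm T}=\mathbb{J}\mathcal{M}$, $\Gamma$ is skew-Hamiltonian, i.e. $(\mathbb{J}\Gamma)^{\mathrm T}=-\mathbb{J}\Gamma$, and for every $\omega\in\mathbb{R}$ the matrix $S(\omega)$ is conjugate-symplectic: $S(\omega)\,\mathbb{J}\,S(\omega)^\dagger=\mathbb{J}$.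
   Context: $\mathrm{Re}$, $\mathrm{Im}$ are entrywise; ${}^{\mathrm T}$ is transpose and ${}^\dagger$ is conjugate transpose; $\sqrt{2\Gamma}$ is the entrywise square root of the diagonal matrix $2\Gamma$. *)

(* Defs.v *)
From HB Require Import structures.
From mathcomp Require Import all_boot all_order all_algebra.
From mathcomp Require Import complex reals.
Set Implicit Arguments. Unset Strict Implicit. Unset Printing Implicit Defensive.
Import Order.TTheory GRing.Theory Num.Theory.
Local Open Scope ring_scope.
Local Open Scope complex_scope.

Section Defs.
Variable R : realType.
Local Notation C := R[i].
Variable N : nat.

Definition ReM (A : 'M[C]_N) : 'M[C]_N := map_mx (fun z => (complex.Re z)%:C) A.
Definition ImM (A : 'M[C]_N) : 'M[C]_N := map_mx (fun z => (complex.Im z)%:C) A.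

Definition adjM m n (A : 'M[C]_(m, n)) : 'M[C]_(n, m) := map_mx (@conjc R) A^T.

Definition hermitianM (A : 'M[C]_N) : Prop := adjM A = A.
Definition symmetricM (A : 'M[C]_N) : Prop := A^T = A.

Definition calM (G F : 'M[C]_N) : 'M[C]_(N + N) :=
  block_mx (ImM (G + F)) (ReM (G - F)) (- ReM (G + F)) (- (ImM (G + F))^T).

Definition Jmx : 'M[C]_(N + N) := block_mx 0 1%:M (- 1%:M) 0.

Definition Gam (g : 'I_N -> R) : 'M[C]_(N + N) :=
  let D := diag_mx (\row_i (g i)%:C) in block_mx D 0 0 D.

Definition sqrt2Gam (g : 'I_N -> R) : 'M[C]_(N + N) :=
  let D := diag_mx (\row_i (Num.sqrt (2 * g i))%:C) in block_mx D 0 0 D.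

Definition resolv (g : 'I_N -> R) (G F : 'M[C]_N) (w : R) : 'M[C]_(N + N) :=
  ('i * w%:C)%:M + Gam g - calM G F.

Definition Smat (g : 'I_N -> R) (G F : 'M[C]_N) (w : R) : 'M[C]_(N + N) :=
  sqrt2Gam g *m invmx (resolv g G F w) *m sqrt2Gam g - 1%:M.
End Defs.

(* Main.v *)
Require Import Defs.
From HB Require Import structures.
From mathcomp Require Import all_boot all_order all_algebra.
From mathcomp Require Import complex reals.
Import Order.TTheory GRing.Theory Num.Theory.
Local Open Scope ring_scope.
Local Open Scope complex_scope.

Section Aux.
Variable R : realType.
Local Notation C := R[i].

Lemma adjM_mul m n p (A : 'M[C]_(m,n)) (B : 'M[C]_(n,p)) : adjM (A *m B) = adjM B *m adjM A.
Proof. by rewrite /adjM trmx_mul map_mxM. Qed.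
Lemma adjMB m n (A B : 'M[C]_(m,n)) : adjM (A - B) = adjM A - adjM B.
Proof. by rewrite /adjM linearB /= map_mxB. Qed.
Lemma adjMD m n (A B : 'M[C]_(m,n)) : adjM (A + B) = adjM A + adjM B.
Proof. by rewrite /adjM linearD /= map_mxD. Qed.
Lemma adjM1 n : adjM (1%:M : 'M[C]_n) = 1%:M.
Proof. by rewrite /adjM trmx1 map_mx1. Qed.
Lemma conj_real (r : R) : (r%:C)^* = r%:C.
Proof. by rewrite /= oppr0. Qed.
Lemma conj_iw (w : R) : ('i * w%:C)^* = - ('i * w%:C).
Proof. by apply/eqP; rewrite eq_complex /= !(mulr0, mul0r, subr0, addr0, mul1r, oppr0, add0r) !eqxx. Qed.
Lemma ReCD (x y : C) : complex.Re (x^* + y) = complex.Re (x + y).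
Proof. by case: x => a b; case: y => c d. Qed.
Lemma ReCB (x y : C) : complex.Re (x^* - y) = complex.Re (x - y).
Proof. by case: x => a b; case: y => c d. Qed.
Lemma zz (V : zmodType) (u v m : V) : v + v = -u + v - - m + (u + v - m).
Proof. by rewrite opprK addrACA subrr addr0 addrACA addNr add0r. Qed.

Lemma adj_iw n (w : R) : adjM (('i * w%:C)%:M : 'M[C]_n) = (- ('i * w%:C))%:M.
Proof.
apply/matrixP => i j; rewrite !mxE eq_sym; case: eqP => _; rewrite ?mulr1n ?mulr0n ?conj_iw //.
by rewrite /= oppr0.
Qed.

Variable N : nat.

Lemma blkJ (D : 'M[C]_N) :
  block_mx D 0 0 D *m Jmx R N = Jmx R N *m block_mx D 0 0 D.
Proof.
rewrite /Jmx !mulmx_block.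
by rewrite !(mul0mx, mulmx0, mul1mx, mulmx1, mulNmx, mulmxN, add0r, addr0).
Qed.

Lemma adj_blk (r : 'I_N -> R) :
  let D := diag_mx (\row_i (r i)%:C) in adjM (block_mx D 0 0 D) = block_mx D 0 0 D.
Proof.
move=> D; rewrite /adjM tr_block_mx !trmx0 map_block_mx !map_mx0 /D tr_diag_mx.
have -> : map_mx (@conjc R) (diag_mx (\row_i (r i)%:C)) = diag_mx (\row_i (r i)%:C).
  by apply/matrixP => i j; rewrite !mxE; case: (i == j); rewrite ?mulr0n ?mulr1n /= ?oppr0.
by [].
Qed.
End Aux.

Theorem mainTheorem2 (R : realType) (N : nat) (hN : (0 < N)%N)
  (g : 'I_N -> R) (hg : forall i, 0 < g i)
  (G F : 'M[R[i]]_N) (hG : hermitianM G) (hF : symmetricM F)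
  (hinv : forall w : R, resolv g G F w \in unitmx) :
  (Jmx R N *m calM G F)^T = Jmx R N *m calM G F /\
  (Jmx R N *m Gam g)^T = - (Jmx R N *m Gam g) /\
  (forall w : R, Smat g G F w *m Jmx R N *m adjM (Smat g G F w) = Jmx R N).
Proof.
have hGij i j : G i j = (G j i)^*.
  by have /matrixP/(_ i j) := (hG : adjM G = G); rewrite /adjM !mxE => <-.
have hFij i j : F i j = F j i.
  by have /matrixP/(_ i j) := (hF : F^T = F); rewrite !mxE => <-.
have sP : (Defs.ReM (G + F))^T = Defs.ReM (G + F).
  by apply/matrixP => i j; rewrite !mxE (hGij j i) (hFij j i) ReCD.
have sM : (Defs.ReM (G - F))^T = Defs.ReM (G - F).
  by apply/matrixP => i j; rewrite !mxE (hGij j i) (hFij j i) ReCB.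
set J := Jmx R N.
have part1 : (J *m calM G F)^T = J *m calM G F.
  rewrite /J /calM /Jmx mulmx_block.
  rewrite !(mul0mx, mul1mx, mulNmx, add0r, addr0) tr_block_mx !linearN /= trmxK sP sM.
  by [].
split; first exact: part1.
split.
  rewrite /J /Gam /Jmx mulmx_block.
  rewrite !(mul0mx, mulmx0, mul1mx, mulNmx, add0r, addr0) tr_block_mx !linearN /= trmx0 tr_diag_mx.
  by rewrite opp_block_mx !oppr0 opprK.
set M := calM G F.
have cM : map_mx (@conjc R) M = M.
  rewrite /M /calM map_block_mx !map_mxN map_trmx.
  have hI (X : 'M[R[i]]_N) : map_mx (@conjc R) (Defs.ImM X) = Defs.ImM X.
    by apply/matrixP => i j; rewrite !mxE conj_real.
  have hR (X : 'M[R[i]]_N) : map_mx (@conjc R) (Defs.ReM X) = Defs.ReM X.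
    by apply/matrixP => i j; rewrite !mxE conj_real.
  by rewrite !hI !hR.
have adjMM : adjM M = M^T by rewrite /adjM -map_trmx cM.
have JMs : J *m M^T + M *m J = 0.
  rewrite /J /M /calM /Jmx tr_block_mx !mulmx_block.
  rewrite !(mul0mx, mulmx0, mul1mx, mulmx1, mulNmx, mulmxN, add0r, addr0).
  rewrite !linearN /= trmxK sP sM add_block_mx.
  by rewrite !opprK !subrr !addNr block_mx0.
have QJ : sqrt2Gam g *m J = J *m sqrt2Gam g by apply: blkJ.
have GJ : Gam g *m J = J *m Gam g by apply: blkJ.
have aQ : adjM (sqrt2Gam g) = sqrt2Gam g by apply: adj_blk.
have aG : adjM (Gam g) = Gam g by apply: adj_blk.
have QQ : sqrt2Gam g *m sqrt2Gam g = Gam g + Gam g.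
  rewrite /sqrt2Gam /Gam mulmx_block !(mul0mx, mulmx0, add0r, addr0) add_block_mx addr0.
  congr block_mx; apply/matrixP => i j; rewrite mul_diag_mx !mxE;
  case: (i == j); rewrite ?mulr0n ?mulr1n ?mulr0 ?addr0 //;
  apply/eqP; rewrite eq_complex /= !(mulr0, mul0r, subr0, addr0) -expr2 sqr_sqrtr ?mulr2n ?eqxx //;
  rewrite ?mulrDl ?mul1r ?eqxx //; exact: addr_ge0 (ltW (hg _)) (ltW (hg _)).
move=> w.
set K := resolv g G F w.
have key : J *m (Gam g + Gam g) = J *m adjM K + K *m J.
  rewrite /K /resolv !adjMB !adjMD adjMM aG.
  rewrite adj_iw -/M.
  rewrite !(mulmxDr, mulmxDl, mulmxN, mulNmx) mul_mx_scalar mul_scalar_mx GJ.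
  have -> : J *m M^T = - (M *m J) by apply/eqP; rewrite -addr_eq0 JMs.
  by rewrite scaleNr; apply: zz.
set Q := sqrt2Gam g.
set A := invmx K.
set B := adjM A.
have hAK : A *m K = 1%:M := mulVmx (hinv w).
have hKA : K *m A = 1%:M := mulmxV (hinv w).
have hKB : adjM K *m B = 1%:M by rewrite /B -adjM_mul hAK adjM1.
have core : A *m J *m (Q *m Q) *m B = A *m J + J *m B.
  rewrite QQ -(mulmxA A J) key mulmxDr mulmxDl -!mulmxA hKB mulmx1 !mulmxA hAK mul1mx.
  by [].
have e : Q *m A *m Q *m J *m (Q *m B *m Q) = Q *m A *m Q *m J + J *m (Q *m B *m Q).
  rewrite -[Q *m A *m Q *m J]mulmxA QJ !mulmxA.
  transitivity (Q *m (A *m J *m (Q *m Q) *m B) *m Q); first by rewrite !mulmxA.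
  rewrite core mulmxDr mulmxDl !mulmxA.
  rewrite -[Q *m A *m J *m Q]mulmxA -QJ mulmxA.
  by rewrite QJ.
have aS : adjM (Smat g G F w) = Q *m B *m Q - 1%:M.
  by rewrite /Smat adjMB adjM1 !adjM_mul aQ -/K -/A -/B mulmxA.
rewrite aS /Smat -/K -/A -/Q.
rewrite mulmxBl mul1mx mulmxBr mulmxBl mulmx1 e.
by rewrite addrK opprB addrC subrK.
Qed.
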